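(* Let $\rho$ be an irreducible representation of $\mathcal U=U_h^{2,q}(\mathbb{F}_{q^2})$ in which $H_{2(h-1)}$ acts via a character $\psi$ of conductor $q^2$ (i.e. $1+a\tau^{2(h-1)}$ acts by $\psi(a)$). Then $\rho$ is uniquely determined up to isomorphism by its restriction to $H$: if $\rho'$ is another such irreducible representation with $\rho'|_H\cong\rho|_H$, then $\rho'\cong\rho$.
   Context: Let $p$ be a prime, $q$ a power of $p$, $\ell\ne p$, and $h\ge2$ an integer; representations are over $\overline{\mathbb{Q}}_\ell$. For a commutative $\mathbb{F}_q$-algebra $A$, $U_h^{2,q}(A)$ is the set of formal expressions $1+\sum_{i=1}^{2(h-1)}a_i\tau^i$ ($a_i\in A$) with multiplication obtained by extending $(a\tau^i)(b\tau^j)=ab^{q^i}\tau^{i+j}$ bi-additively, where $\tau^0=1$ and $\tau^k=0$ for $k>2(h-1)$. In $\mathcal U=U_h^{2,q}(\mathbb{F}_{q^2})$ let $H=\{1+\sum a_i\tau^i: a_i=0\text{ for all odd }i\}$ and $H_{2(h-1)}=\{1+a\tau^{2(h-1)}: a\in\mathbb{F}_{q^2}\}$. An additive character $\psi\colon\mathbb{F}_{q^2}\to\overline{\mathbb{Q}}_\ell^\times$ has conductor $q^2$ if there exists $x$ with $\psi(x^q)\ne\psi(x)$. *)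

(* Defs.v *)
From HB Require Import structures.
From mathcomp Require Import all_boot all_order all_algebra all_fingroup all_field all_character.
Set Implicit Arguments. Unset Strict Implicit. Unset Printing Implicit Defensive.
Import GRing.Theory.
Local Open Scope ring_scope.

(* Elements 1 + sum_{i=1}^{N} a_i tau^i of U_h^{2,q}(K), N = 2(h-1), are
   encoded by a : {ffun 'I_N -> K}, with a j = coefficient of tau^(j+1). *)

(* coefficient of tau^n (tau^0 = 1, tau^n = 0 for n > N) *)
Definition Ucoef (K : fieldType) (N : nat) (a : {ffun 'I_N -> K}) (n : nat) : K :=
  if n == 0%N then 1 else
  match insub n.-1 with Some j => a j | None => 0 end.

(* product: (a tau^i)(b tau^j) = a b^(q^i) tau^(i+j), extended bi-additively *)
Definition Umul (K : fieldType) (q N : nat) (a b : {ffun 'I_N -> K})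
  : {ffun 'I_N -> K} :=
  [ffun k : 'I_N => \sum_(i < k.+2) Ucoef a i * (Ucoef b (k.+1 - i)%N) ^+ (q ^ i)].

Definition Uevenset (K : finFieldType) (N : nat) : {set {ffun 'I_N -> K}} :=
  [set a : {ffun 'I_N -> K} | [forall j : 'I_N, odd j.+1 ==> (a j == 0)]].

Definition Utop (K : fieldType) (N : nat) (x : K) : {ffun 'I_N -> K} :=
  [ffun j : 'I_N => if j.+1 == N then x else 0].

(* Main.v *)
Require Import Defs.
From HB Require Import structures.
From mathcomp Require Import all_boot all_order all_algebra all_fingroup all_field all_character.
From mathcomp Require Import pgroup zify.
Import GRing.Theory.
Local Open Scope ring_scope.

Lemma rsim_of_trace (F : closedFieldType) (gT : finGroupType) (G : {group gT})
  n n' (r : mx_representation F G n) (r' : mx_representation F G n') :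
  [pchar F] =i pred0 -> mx_irreducible r -> mx_irreducible r' ->
  {in G, forall x, \tr (r x) = \tr (r' x)} -> mx_rsim r r'.
Proof.
move=> ch0 irr irr' tr_eq.
have F'G : pgroup ([pchar F])^' G.
  by apply/pgroupP=> p pr _; rewrite inE /= ch0.
pose sG := DecSocleType (regular_repr F G).
have tr_op m1 m2 (r1 : mx_representation F G m1) (r2 : mx_representation F G m2) :
   {in G, forall x, \tr (r1 x) = \tr (r2 x)} -> forall A, (A \in group_ring F G)%MS ->
   \tr (gring_op r1 A) = \tr (gring_op r2 A).
  move=> eq12 A /envelop_mxP[a ->]; rewrite !linear_sum; apply: eq_bigr => x Gx.
  by rewrite !linearZ /= !gring_opG // eq12.
have rs := rsim_irr_comp_pchar sG F'G irr.
have rs' := rsim_irr_comp_pchar sG F'G irr'.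
case: (eqVneq (irr_comp sG r) (irr_comp sG r')) => [eqi | nei].
  apply: mx_rsim_trans rs _; rewrite eqi; exact: mx_rsim_sym rs'.
pose i := irr_comp sG r.
have Re : (Wedderburn_id i \in group_ring F G)%MS.
  by rewrite -(Wedderburn_sum_pchar sG F'G) (sumsmx_sup i) ?Wedderburn_id_mem.
have h0 : \tr (gring_op r' (Wedderburn_id i)) = 0.
  by rewrite (irr_comp'_op0_pchar F'G irr' nei) ?Wedderburn_id_mem // mxtrace0.
have h1 : \tr (gring_op (irr_repr i) (Wedderburn_id i)) = (irr_degree i)%:R.
  by rewrite op_Wedderburn_id_pchar // mxtrace1.
have : \tr (gring_op (irr_repr i) (Wedderburn_id i)) =
       \tr (gring_op r' (Wedderburn_id i)).
  apply: tr_op Re => x Gx; rewrite -(mxtrace_rsim rs Gx); exact: tr_eq.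
rewrite h1 h0 => /eqP; rewrite (proj1 (pcharf0P F) ch0) => /eqP d0.
by have := irr_degree_gt0 i; rewrite d0.
Qed.

Definition mono (K : fieldType) (N j : nat) (b : K) : {ffun 'I_N -> K} :=
  [ffun i : 'I_N => if i.+1 == j then b else 0].
Arguments mono {K} N j b.

Lemma Ucoef0 (K : fieldType) N (a : {ffun 'I_N -> K}) : Ucoef a 0 = 1.
Proof. by []. Qed.

Lemma Ucoef_gt (K : fieldType) N (a : {ffun 'I_N -> K}) n : (N < n)%N -> Ucoef a n = 0.
Proof.
move=> lt; rewrite /Ucoef; case: n lt => // n lt /=.
by rewrite insubF // ltnNge -ltnS lt.
Qed.

Lemma Ucoef_ord (K : fieldType) N (a : {ffun 'I_N -> K}) (j : 'I_N) : Ucoef a j.+1 = a j.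
Proof.
rewrite /Ucoef /=; case: insubP => [k _ kj | /negP]; last by rewrite ltn_ord.
by congr (a _); apply: val_inj.
Qed.

Lemma Ucoef_eq (K : fieldType) N (a b : {ffun 'I_N -> K}) :
  (forall n, (0 < n <= N)%N -> Ucoef a n = Ucoef b n) -> a = b.
Proof.
move=> H; apply/ffunP => j; rewrite -!Ucoef_ord; apply: H.
by rewrite /= ltn_ord.
Qed.

Lemma Ucoef_Umul (K : fieldType) q N (a b : {ffun 'I_N -> K}) n : (n <= N)%N ->
  Ucoef (Umul q a b) n = \sum_(i < n.+1) Ucoef a i * Ucoef b (n - i) ^+ (q ^ i).
Proof.
case: n => [|n] le.
  by rewrite big_ord1 /= /Ucoef /= mul1r expr1.
have ltn : (n < N)%N by [].
by rewrite -[n]/(nat_of_ord (Ordinal ltn)) Ucoef_ord ffunE.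
Qed.

Lemma Ucoef_mono (K : fieldType) N j (b : K) n : (0 < j <= N)%N ->
  Ucoef (mono N j b) n = if n == 0%N then 1 else if n == j then b else 0.
Proof.
move=> /andP[j0 jN]; case: n => [|n] //=.
case: (ltnP n N) => [lt | ge].
  by rewrite -[n]/(nat_of_ord (Ordinal lt)) Ucoef_ord ffunE.
rewrite Ucoef_gt //; case: eqP => // e; move: ge jN; rewrite -e.
by move=> a b'; have := leq_trans b' a; rewrite ltnn.
Qed.

Lemma sum_two (K : fieldType) n (F : nat -> K) j : (0 < j)%N ->
  (forall i, (0 < i <= n)%N -> i != j -> F i = 0) ->
  \sum_(i < n.+1) F i = F 0%N + (if (j <= n)%N then F j else 0).
Proof.
move=> j0 H; rewrite big_ord_recl; congr (_ + _).
case: leqP => hj.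
  have lt : (j.-1 < n)%N by rewrite prednK.
  rewrite (bigD1 (Ordinal lt)) //= /bump leq0n add1n prednK // big1 ?addr0 //.
  move=> i ne; rewrite /bump leq0n add1n; apply: H; first by rewrite /= ltn_ord.
  apply: contra ne => /eqP e; apply/eqP/val_inj => /=; by rewrite -e.
rewrite big1 // => i _; rewrite /= /bump leq0n add1n; apply: H; first by rewrite /= ltn_ord.
by rewrite neq_ltn (leq_ltn_trans (ltn_ord i) hj).
Qed.

Lemma Umul_monoL (K : fieldType) q N (a : {ffun 'I_N -> K}) j b n :
  (0 < j <= N)%N -> (n <= N)%N ->
  Ucoef (Umul q (mono N j b) a) n =
    Ucoef a n + (if (j <= n)%N then b * Ucoef a (n - j) ^+ (q ^ j) else 0).
Proof.
move=> hj hn; have j0 : (0 < j)%N by case/andP: hj.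
rewrite Ucoef_Umul // (@sum_two _ n (fun i => Ucoef (mono N j b) i * Ucoef a (n - i) ^+ (q ^ i)) j) //; last first.
  move=> i /andP[i0 _] ne; rewrite Ucoef_mono // (negPf ne).
  by case: i i0 ne => // i _ _; rewrite mul0r.
rewrite /= mul1r expn0 expr1 subn0; congr (_ + _).
case: ifP => // _; rewrite Ucoef_mono // eqxx.
by rewrite eqn0Ngt j0.
Qed.

Lemma Umul_monoR (K : fieldType) q N (a : {ffun 'I_N -> K}) j b n :
  (0 < q)%N -> (0 < j <= N)%N -> (n <= N)%N ->
  Ucoef (Umul q a (mono N j b)) n =
    Ucoef a n + (if (j <= n)%N then Ucoef a (n - j) * b ^+ (q ^ (n - j)) else 0).
Proof.
move=> q0 hj hn; have j0 : (0 < j)%N by case/andP: hj.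
rewrite Ucoef_Umul // (reindex_inj rev_ord_inj) /=.
rewrite (@sum_two _ n (fun i => Ucoef a (n.+1 - i.+1) * Ucoef (mono N j b) (n - (n.+1 - i.+1)) ^+ (q ^ (n.+1 - i.+1))) j) //; last first.
  move=> i /andP[i0 ilen] ne; rewrite subSS subKn // Ucoef_mono // (negPf ne).
  by case: i i0 ilen ne => // i _ _ _; rewrite expr0n eqn0Ngt expn_gt0 q0 /= mulr0.
rewrite !subSS !subn0 subnn /= expr1n mulr1; congr (_ + _).
case: ifP => // jn; rewrite subKn // Ucoef_mono // eqxx.
by rewrite eqn0Ngt j0.
Qed.

Lemma frob_even (K : finFieldType) q (x : K) t : #|K| = (q ^ 2)%N ->
  x ^+ (q ^ (2 * t)) = x.
Proof.
move=> hK; elim: t => [|t IH]; first by rewrite muln0 expn0 expr1.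
by rewrite mulnS expnD exprM -hK expf_card IH.
Qed.

Lemma frob_par (K : finFieldType) q (x : K) i : #|K| = (q ^ 2)%N ->
  x ^+ (q ^ i) = if odd i then x ^+ q else x.
Proof.
move=> hK; rewrite -{1}(odd_double_half i) expnD exprM -mul2n frob_even //.
by case: (odd i); rewrite ?expn1 ?expn0 ?expr1.
Qed.

Lemma tr_conj (F : fieldType) (gT : finGroupType) (G : {group gT}) n
  (r : mx_representation F G n) x g : x \in G -> g \in G ->
  \tr (r (x^-1 * g * x)%g) = \tr (r g).
Proof.
move=> Gx Gg; rewrite !repr_mxM ?groupM ?groupV // mxtrace_mulC mulmxA.
by rewrite -!repr_mxM ?groupM ?groupV // mulgV mul1g.
Qed.

Lemma odd_step (K : finFieldType) q N (a : {ffun 'I_N -> K}) m c x0 :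
  (0 < q)%N -> #|K| = (q ^ 2)%N -> ~~ odd N ->
  (0 < m)%N -> odd m -> (m <= N)%N ->
  (forall i, (0 < i < m)%N -> Ucoef a i = 0) -> Ucoef a m = c -> c != 0 ->
  exists y, Umul q y a = Umul q (Umul q a y) (mono N N (x0 - x0 ^+ q)).
Proof.
move=> q0 hK eN m0 om mN van am cn0.
have mN' : (m < N)%N by rewrite ltn_neqAle mN andbT; apply: contraNneq eN => <-.
set j := (N - m)%N.
have hj : (0 < j <= N)%N by rewrite subn_gt0 mN' leq_subr.
have hN : (0 < N <= N)%N by rewrite leqnn (leq_ltn_trans (leq0n _) mN').
have oj : odd j by rewrite oddB // (negPf eN) om.
set b := x0 / c ^+ q.
exists (mono N j b); apply: Ucoef_eq => n /andP[n0 nN].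
have nNN : (n - N <= N)%N by rewrite (leq_trans (leq_subr _ _)).
rewrite Umul_monoL // Umul_monoR // !Umul_monoR //.
case: (ltngtP n N) => [ltnN | ltNn | eqnN]; last 2 first.
  by move: ltNn; rewrite ltnNge nN.
  have -> : (n - j = m)%N by rewrite eqnN subKn.
  have jN : (j <= N)%N by case/andP: hj.
  have j0 : (j <= 0)%N = false by apply/negbTE; rewrite -ltnNge; case/andP: hj.
  rewrite eqnN jN subnn j0 Ucoef0 addr0 mul1r expn0 expr1 am.
  rewrite frob_par // oj frob_par // om.
  rewrite exprMn exprVn -exprM mulnn frob_par // /=.
  rewrite -addrA; congr (_ + _).
  by rewrite /b mulfVK ?expf_neq0 // [c * _]mulrC mulfVK // addrC subrK.
rewrite addr0; congr (_ + _); case: ifP => // jn.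
have : (n - j < m)%N.
  by rewrite /j; lia.
case: (posnP (n - j)) => [-> _ | pos lt].
  by rewrite Ucoef0 expr1n mulr1 mul1r expn0 expr1.
by rewrite van ?pos ?lt // expr0n eqn0Ngt expn_gt0 q0 mul0r mulr0.
Qed.

Lemma mono_central (K : finFieldType) q N (w : {ffun 'I_N -> K}) m c :
  (0 < q)%N -> #|K| = (q ^ 2)%N -> (0 < m <= N)%N -> ~~ odd m -> c ^+ q = c ->
  Umul q (mono N m c) w = Umul q w (mono N m c).
Proof.
move=> q0 hK hm em cq; apply: Ucoef_eq => n /andP[n0 nN].
rewrite Umul_monoL // Umul_monoR //; congr (_ + _); case: ifP => // _.
by rewrite frob_par // (negPf em) frob_par //; case: ifP; rewrite ?cq mulrC.
Qed.

Lemma central_step (K : finFieldType) q N (a a' : {ffun 'I_N -> K}) m :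
  (0 < m <= N)%N ->
  (forall i, (0 < i < m)%N -> Ucoef a i = 0) ->
  Umul q (mono N m (Ucoef a m)) a' = a ->
  forall i, (0 < i < m.+1)%N -> Ucoef a' i = 0.
Proof.
move=> hm van E i /andP[i0 im].
have iN : (i <= N)%N by case/andP: hm => _; apply: leq_trans.
have := congr1 (fun x => Ucoef x i) E; rewrite /= Umul_monoL //.
rewrite leq_eqVlt ltnNge -ltnS im orbF.
case: eqP => [-> | ne].
  by rewrite subnn Ucoef0 expr1n mulr1 => h; apply: (addIr (Ucoef a i)); rewrite add0r.
rewrite addr0 => ->; apply: van; rewrite i0 /= ltn_neqAle -ltnS im andbT eq_sym.
by apply/eqP.
Qed.

Lemma inner_step (K : finFieldType) q N (a : {ffun 'I_N -> K}) m d :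
  (0 < q)%N -> #|K| = (q ^ 2)%N ->
  (0 < m)%N -> ~~ odd m -> (m < d)%N -> (d <= N)%N -> odd d ->
  Ucoef a m ^+ q != Ucoef a m ->
  (forall i, (0 < i < m)%N -> Ucoef a i = 0) ->
  (forall i, (i < d)%N -> odd i -> Ucoef a i = 0) ->
  exists y, forall a', Umul q y a = Umul q a' y ->
    [/\ forall i, (0 < i < m)%N -> Ucoef a' i = 0,
        Ucoef a' m = Ucoef a m &
        forall i, (i < d.+1)%N -> odd i -> Ucoef a' i = 0].
Proof.
move=> q0 hK m0 em md dN od cq van vodd.
set c := Ucoef a m in cq *.
set j := (d - m)%N.
have hj : (0 < j <= N)%N by rewrite subn_gt0 md /j; lia.
have oj : odd j by rewrite oddB ?(ltnW md) // od (negPf em).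
have cq0 : c - c ^+ q != 0 by rewrite subr_eq0 eq_sym.
set b := Ucoef a d / (c - c ^+ q).
exists (mono N j b) => a' E.
have Ec n : (n <= N)%N -> Ucoef (Umul q (mono N j b) a) n = Ucoef (Umul q a' (mono N j b)) n.
  by move=> _; rewrite E.
have low : forall n, (n < d)%N -> Ucoef a' n = Ucoef a n.
  elim/ltn_ind => n IH nd.
  case: (posnP n) => [-> // | n0].
  have := Ec n (leq_trans (ltnW nd) dN); rewrite Umul_monoL ?Umul_monoR //; try lia.
  case: ifP => jn; last by rewrite !addr0.
  case: (posnP (n - j)) => [-> | pos].
    by rewrite Ucoef0 expr1n mulr1 mul1r expn0 expr1 => /addIr.
  have lt : (n - j < m)%N by rewrite /j; lia.
  have e1 : Ucoef a' (n - j) = Ucoef a (n - j) by apply: IH; lia.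
  rewrite e1 (van (n - j)%N) ?pos ?lt //.
  by rewrite expr0n eqn0Ngt expn_gt0 q0 mulr0 mul0r => /addIr.
have a'm : Ucoef a' m = c by rewrite low.
have a'd : Ucoef a' d = 0.
  have := Ec d dN; rewrite Umul_monoL ?Umul_monoR //.
  have -> : (j <= d)%N by rewrite /j leq_subr.
  have -> : (d - j = m)%N by rewrite /j; lia.
  rewrite a'm -/c frob_par // oj frob_par // (negPf em) => /eqP.
  rewrite -subr_eq -addrA [c * b]mulrC -mulrBr -opprB mulrN /b divfK // subrr.
  by move/eqP.
split => // [i /andP[i0 im] | i id oi].
  by rewrite low ?van ?i0 //; lia.
have [lt|gt|->] := ltngtP i d; [by rewrite low // vodd | lia | done].
Qed.

Lemma evenP (K : finFieldType) N (a : {ffun 'I_N -> K}) :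
  (forall i, (i <= N)%N -> odd i -> Ucoef a i = 0) -> a \in Uevenset K N.
Proof.
move=> H; rewrite inE; apply/forallP => j; apply/implyP => o.
by rewrite -Ucoef_ord; apply/eqP; apply: H => //; exact: ltn_ord.
Qed.

Lemma main_tr (K : finFieldType) (F : closedFieldType) (gT : finGroupType) (G H : {group gT})
  N q (phi : {ffun 'I_N -> K} -> gT) (psi : K -> F) (sHG : H \subset G)
  n n' (rho : mx_representation F G n) (rho' : mx_representation F G n') :
  (0 < q)%N -> #|K| = (q ^ 2)%N -> ~~ odd N -> [pchar F] =i pred0 ->
  injective phi -> G :=: phi @: [set: {ffun 'I_N -> K}] ->
  (forall a b, phi (Umul q a b) = (phi a * phi b)%g) ->
  H :=: phi @: Uevenset K N ->
  (forall x y, psi (x + y) = psi x * psi y) ->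
  (exists x : K, psi (x ^+ q) != psi x) ->
  mx_irreducible rho -> mx_irreducible rho' ->
  (forall x : K, rho (phi (mono N N x)) = (psi x)%:M) ->
  (forall x : K, rho' (phi (mono N N x)) = (psi x)%:M) ->
  mx_rsim (subg_repr rho sHG) (subg_repr rho' sHG) ->
  {in G, forall g, \tr (rho g) = \tr (rho' g)}.
Proof.
move=> q0 hK eN ch0 injphi eG phiM eH psiD [x0 hx0] irr irr' top top' rsH.
have memG a : phi a \in G by rewrite eG imset_f ?inE.
have allG g : g \in G -> exists a, g = phi a.
  by rewrite eG => /imsetP[a _ ->]; exists a.
have trH a : a \in Uevenset K N -> \tr (rho (phi a)) = \tr (rho' (phi a)).
  move=> ha; have Ha : phi a \in H by rewrite eH imset_f.
  exact: (mxtrace_rsim rsH Ha).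
have oddz m (r : mx_representation F G m) :
    (forall x : K, r (phi (mono N N x)) = (psi x)%:M) ->
    forall a y e, Umul q y a = Umul q (Umul q a y) (mono N N e) -> psi e != 1 ->
    \tr (r (phi a)) = 0.
  move=> rtop a y e E pe.
  have E' : (phi y * phi a = phi a * phi y * phi (mono N N e))%g by rewrite -!phiM E.
  have : \tr (r (phi a)) = psi e * \tr (r (phi a)).
    rewrite -{1}[phi a](mulKg (phi y)) E' mulgA repr_mxM ?groupM ?groupV ?memG //.
    by rewrite rtop mul_mx_scalar mxtraceZ mulgA tr_conj ?memG.
  move/eqP; rewrite -subr_eq0 -{1}[\tr _]mul1r -mulrBl mulf_eq0 subr_eq0 eq_sym.
  by rewrite (negPf pe) => /eqP.
have scal m (r : mx_representation F G m) : mx_irreducible r ->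
    forall z, (forall w, Umul q z w = Umul q w z) -> exists l, r (phi z) = l%:M.
  move=> ir z zc; apply/is_scalar_mxP.
  apply: (mx_abs_irr_cent_scalar (group_closure_closed_field ir)).
  apply/centgmxP => x /allG[w ->].
  by rewrite -!repr_mxM ?memG // -!phiM zc.
have n_eq : n = n' := mxrank_rsim rsH.
have n0 : (0 < n)%N by case/mx_irrP: irr.
have nR : (n%:R : F) != 0 by rewrite (proj1 (pcharf0P F) ch0) -lt0n.
pose P a := \tr (rho (phi a)) = \tr (rho' (phi a)).
have baseP a : (forall i, (i <= N)%N -> odd i -> Ucoef a i = 0) -> P a.
  by move=> h; apply: trH; apply: evenP.
have main : forall t m a, (0 < m)%N -> (N.+1 - m <= t)%N ->
    (forall i, (0 < i < m)%N -> Ucoef a i = 0) -> P a.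
  elim=> [|t IH] m a m0 ht van.
    apply: baseP => i iN oi; apply: van; rewrite (leq_ltn_trans iN) ?andbT; last by lia.
    by case: i oi {iN}.
  case: (leqP m N) => mN; last first.
    apply: baseP => i iN oi; apply: van; rewrite (leq_ltn_trans iN) ?andbT //.
    by case: i oi {iN}.
  have IHm b : (forall i, (0 < i < m.+1)%N -> Ucoef b i = 0) -> P b.
    by apply: (IH m.+1) => //; lia.
  case: (eqVneq (Ucoef a m) 0) => [am0 | amn0].
    apply: IHm => i /andP[i0]; rewrite ltnS leq_eqVlt => /orP[/eqP -> // | im].
    by apply: van; rewrite i0.
  case: (boolP (odd m)) => om.
    have [y Ey] := @odd_step K q N a m (Ucoef a m) x0 q0 hK eN m0 om mN van erefl amn0.
    have pe : psi (x0 - x0 ^+ q) != 1.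
      apply: contra hx0 => /eqP pe1; apply/eqP.
      by rewrite -{2}[x0](subrK (x0 ^+ q)) psiD pe1 mul1r.
    by rewrite /P (oddz _ _ top _ _ _ Ey pe) (oddz _ _ top' _ _ _ Ey pe).
  case: (eqVneq (Ucoef a m ^+ q) (Ucoef a m)) => cq.
    set z := mono N m (Ucoef a m).
    have hm : (0 < m <= N)%N by rewrite m0 mN.
    have zc w : Umul q z w = Umul q w z by apply: mono_central.
    have [a' Ea'] : exists a', ((phi z)^-1 * phi a)%g = phi a' by apply: allG; rewrite groupM ?groupV ?memG.
    have Ez : Umul q z a' = a by apply: injphi; rewrite phiM -Ea' mulKVg.
    have Pa' : P a' by apply: IHm; apply: (@central_step K q N a a' m hm van Ez).
    have [l hl] := scal _ _ irr z zc.
    have [l' hl'] := scal _ _ irr' z zc.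
    have zH : z \in Uevenset K N.
      apply: evenP => i iN oi; rewrite Ucoef_mono //.
      case: eqP => [i0 | _]; first by rewrite i0 in oi.
      by case: eqP => [im | _] //; move: om; rewrite -im oi.
    have ll : l = l'.
      have := trH z zH; rewrite hl hl' !mxtrace_scalar -n_eq => e.
      by apply: (mulIf nR); rewrite !mulr_natr.
    rewrite /P -Ez !phiM !repr_mxM ?memG // hl hl' ll !mul_scalar_mx !mxtraceZ.
    by rewrite Pa'.
  have inner : forall s d b, (N.+1 - d <= s)%N ->
      (forall i, (0 < i < m)%N -> Ucoef b i = 0) -> Ucoef b m = Ucoef a m ->
      (forall i, (i < d)%N -> odd i -> Ucoef b i = 0) -> P b.
    elim=> [|s IHs] d b hs vb bm vodd.
      by apply: baseP => i iN oi; apply: vodd => //; lia.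
    case: (leqP d N) => dN; last by apply: baseP => i iN oi; apply: vodd => //; lia.
    case: (boolP (odd d)) => od; last first.
      apply: (IHs d.+1) => //; first by lia.
      move=> i; rewrite ltnS leq_eqVlt => /orP[/eqP -> | id]; first by rewrite (negPf od).
      exact: vodd.
    case: (ltnP m d) => md; last first.
      apply: (IHs d.+1) => //; first by lia.
      move=> i; rewrite ltnS leq_eqVlt => /orP[/eqP -> _ | id]; last exact: vodd.
      apply: vb; apply/andP; split; first by case: (d) od.
      by rewrite ltn_neqAle md andbT; apply/eqP => em; move: om; rewrite -em od.
    have [y Hy] := @inner_step K q N b m d q0 hK m0 om md dN od ltac:(by rewrite bm) vb vodd.
    have [a' Ea'] : exists a', (phi y * phi b * (phi y)^-1)%g = phi a' by apply: allG; rewrite !groupM ?groupV ?memG.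
    have E : Umul q y b = Umul q a' y.
      by apply: injphi; rewrite !phiM -Ea' mulgKV.
    have [h1 h2 h3] := Hy a' E.
    have Pa' : P a' by apply: (IHs d.+1) => //; [lia | rewrite h2].
    rewrite /P; have -> : phi b = ((phi y)^-1 * phi a' * phi y)%g.
      by rewrite -Ea' !mulgA mulVg mul1g mulgKV.
    by rewrite !tr_conj ?memG.
  apply: (inner N 1%N) => //; first by lia.
  by case.
move=> g /allG[a ->]; apply: (main N 1%N) => //; first by lia.
by move=> i; lia.
Qed.

Theorem corollary3p3
  (p k h : nat) (K : finFieldType) (F : closedFieldType)
  (gT : finGroupType) (G H : {group gT})
  (phi : {ffun 'I_(2 * h.-1) -> K} -> gT) (psi : K -> F)
  (sHG : H \subset G)
  (n n' : nat) (rho : mx_representation F G n) (rho' : mx_representation F G n') :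
  prime p -> (0 < k)%N -> #|K| = ((p ^ k) ^ 2)%N -> (2 <= h)%N ->
  [pchar F] =i pred0 ->
  (* G is (a copy of) U_h^{2,q}(F_{q^2}), q = p^k, via the isomorphism phi *)
  injective phi -> G :=: phi @: [set: {ffun 'I_(2 * h.-1) -> K}] ->
  (forall a b, phi (Umul (p ^ k) a b) = (phi a * phi b)%g) ->
  H :=: phi @: Uevenset K (2 * h.-1) ->
  (* psi is an additive character of conductor q^2 *)
  psi 0 = 1 -> (forall x y, psi (x + y) = psi x * psi y) ->
  (exists x : K, psi (x ^+ (p ^ k)) != psi x) ->
  (* rho, rho' irreducible, H_{2(h-1)} acting via psi *)
  mx_irreducible rho -> mx_irreducible rho' ->
  (forall x : K, rho (phi (Utop (2 * h.-1) x)) = (psi x)%:M) ->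
  (forall x : K, rho' (phi (Utop (2 * h.-1) x)) = (psi x)%:M) ->
  mx_rsim (subg_repr rho sHG) (subg_repr rho' sHG) ->
  mx_rsim rho rho'.
Proof.
move=> pp k0 hK h2 ch0 injphi eG phiM eH psi0 psiD hx irr irr' top top' rsH.
apply: rsim_of_trace => //.
have q0 : (0 < p ^ k)%N by rewrite expn_gt0 prime_gt0.
have := @main_tr K F gT G H (2 * h.-1) (p ^ k) phi psi sHG n n' rho rho' q0 hK.
have eN : ~~ odd (2 * h.-1) by rewrite mul2n odd_double.
by move/(_ eN ch0 injphi eG phiM eH psiD hx irr irr' top top' rsH).
Qed.
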